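(* $\frac{n^2}{12}+O(n)\le\mathrm{sat}_\circlearrowright(n,D_2)\le\frac{5n^2}{24}+O(n)$.
   Context: $\Omega_n=\{v_0,\dots,v_{n-1}\}$ with cyclic order $v_0<\dots<v_{n-1}<v_0$ (indices mod $n$). A $3$-cgh on $\Omega_n$ is a family of $3$-subsets of $\Omega_n$. For a $3$-cgh $F$, $H$ contains a copy of $F$ if there is an injection of the vertex set of $F$ into $\Omega_n$ preserving the cyclic order and mapping every edge of $F$ to an edge of $H$. $H$ is $F$-saturated if it contains no copy of $F$ but $H\cup\{e\}$ does for every $e\in\binom{\Omega_n}{3}\setminus H$; $\mathrm{sat}_\circlearrowright(n,F)$ is the minimum number of edges of an $F$-saturated $3$-cgh on $\Omega_n$. $D_2$ is the $3$-cgh on $\Omega_4$ with edges $\{v_0,v_1,v_2\}$ and $\{v_0,v_1,v_3\}$ (two triples sharing a pair whose remaining vertices lie on the same side of the chord through the shared pair). *)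

(* Defs.v *)
From mathcomp Require Import all_boot.
Set Implicit Arguments. Unset Strict Implicit. Unset Printing Implicit Defensive.

(* Vertex set Omega_n = 'I_n, with cyclic order 0 < 1 < ... < n-1 < 0. *)

Definition cyc (x y z : nat) : bool :=
  [|| (x < y < z), (y < z < x) | (z < x < y)]%N.

Definition is_cgh3 n (H : {set {set 'I_n}}) : bool :=
  [forall e in H, #|e| == 3].

Definition contains_copy k n (F : {set {set 'I_k}}) (H : {set {set 'I_n}}) : bool :=
  [exists phi : {ffun 'I_k -> 'I_n},
    [&& injectiveb phi,
        [forall a : 'I_k, forall b : 'I_k, forall c : 'I_k,
           cyc a b c == cyc (phi a) (phi b) (phi c)] &
        [forall e in F, phi @: e \in H]]].

Definition saturated k n (F : {set {set 'I_k}}) (H : {set {set 'I_n}}) : bool :=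
  [&& is_cgh3 H, ~~ contains_copy F H &
      [forall e : {set 'I_n}, ((#|e| == 3) && (e \notin H)) ==> contains_copy F (e |: H)]].

(* sat_cyc n F = minimum number of edges of an F-saturated 3-cgh on Omega_n.
   (The default value 'C(n,3) bounds the size of every 3-cgh, and
   F-saturated 3-cghs always exist, so this is the true minimum.) *)
Definition sat_cyc k n (F : {set {set 'I_k}}) : nat :=
  \big[minn/'C(n, 3)]_(H : {set {set 'I_n}} | saturated F H) #|H|.

Definition D2 : {set {set 'I_4}} :=
  [set [set (inord 0 : 'I_4); inord 1; inord 2];
       [set (inord 0 : 'I_4); inord 1; inord 3]].

(* Main.v *)
Require Import Defs.
From mathcomp Require Import all_boot.
From mathcomp Require Import zify.

Definition gap (n u v : nat) : nat := if u <= v then v - u else n + v - u.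

Lemma cyc_rot a b c : cyc a b c = cyc b c a.
Proof. rewrite /cyc; lia. Qed.

Lemma cyc_gapP n a b c : a < n -> b < n -> c < n ->
  cyc a b c = [&& a != b, b != c, c != a & gap n a b + gap n b c < n].
Proof.
move=> ha hb hc; rewrite /gap /cyc.
case: (leqP a b) => h1; case: (leqP b c) => h2; lia.
Qed.

Lemma cyc_gap_sum n a b c : a < n -> b < n -> c < n -> cyc a b c ->
  gap n a b + gap n b c + gap n c a = n.
Proof.
move=> ha hb hc; rewrite /gap /cyc.
case: (leqP a b) => h1; case: (leqP b c) => h2; case: (leqP c a) => h3; lia.
Qed.

Lemma gap_sym n a b : a < n -> b < n -> a != b -> gap n a b + gap n b a = n.
Proof. move=> ha hb; rewrite /gap; case: (leqP a b) => h1; case: (leqP b a) => h2; lia. Qed.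

Lemma gap_bnd n a b : a < n -> b < n -> a != b -> 0 < gap n a b < n.
Proof. move=> ha hb; rewrite /gap; case: (leqP a b) => h1; lia. Qed.

Lemma cyc_or a b c : a != b -> b != c -> c != a -> cyc a b c || cyc a c b.
Proof. rewrite /cyc; lia. Qed.

Lemma rot3_nat p0 p1 p2 a b c :
  [|| p0 == a, p0 == b | p0 == c] -> [|| p1 == a, p1 == b | p1 == c] ->
  [|| p2 == a, p2 == b | p2 == c] -> cyc p0 p1 p2 -> cyc a b c ->
  (p0 = a /\ p1 = b /\ p2 = c) \/ (p0 = b /\ p1 = c /\ p2 = a) \/
      (p0 = c /\ p1 = a /\ p2 = b).
Proof. rewrite /cyc; lia. Qed.

Lemma cyc_xxy x y : cyc x x y = false. Proof. rewrite /cyc; lia. Qed.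
Lemma cyc_xyx x y : cyc x y x = false. Proof. rewrite /cyc; lia. Qed.
Lemma cyc_yxx x y : cyc y x x = false. Proof. rewrite /cyc; lia. Qed.
Lemma cyc_anti {a b c} : cyc a b c -> cyc a c b = false.
Proof. rewrite /cyc; lia. Qed.
Lemma cyc_le2 (a b c w : nat) : cyc a b c -> (cyc a b w + cyc b c w + cyc c a w <= 2)%N.
Proof. rewrite /cyc. lia. Qed.
Set Implicit Arguments.

Lemma copy_inv n (H : {set {set 'I_n}}) : contains_copy D2 H ->
  exists p0 p1 p2 p3 : 'I_n, [/\ cyc p0 p1 p2, cyc p0 p1 p3, p2 != p3,
     [set p0; p1; p2] \in H & [set p0; p1; p3] \in H].
Proof.
case/existsP => phi /and3P [/injectiveP inj /forallP hc /forallP he].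
exists (phi (inord 0)), (phi (inord 1)), (phi (inord 2)), (phi (inord 3)).
have hcyc : forall i j k : nat, i < 4 -> j < 4 -> k < 4 -> cyc i j k ->
   cyc (phi (inord i)) (phi (inord j)) (phi (inord k)).
  move=> i j k hi hj hk h.
  move: (hc (inord i)) => /forallP /(_ (inord j)) /forallP /(_ (inord k)) /eqP <-.
  by rewrite !inordK.
split.
- exact: hcyc.
- exact: hcyc.
- apply/eqP => /inj /(congr1 (@nat_of_ord 4)); rewrite !inordK //.
- have := he [set (inord 0 : 'I_4); inord 1; inord 2].
  rewrite /D2 !inE eqxx /=.
  by rewrite !imsetU !imset_set1.
- have := he [set (inord 0 : 'I_4); inord 1; inord 3].
  rewrite /D2 !inE eqxx orbT /=.
  by rewrite !imsetU !imset_set1.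
Qed.

Lemma copy_of4 n (H : {set {set 'I_n}}) (p0 p1 p2 p3 : 'I_n) :
  cyc p0 p1 p2 -> cyc p0 p2 p3 ->
  [set p0; p1; p2] \in H -> [set p0; p1; p3] \in H -> contains_copy D2 H.
Proof.
move=> h1 h2 e1 e2.
have c1 := h1; have c2 := h2; move: c1 c2; rewrite /cyc => c1 c2.
apply/existsP; exists [ffun i : 'I_4 => nth p0 [:: p0; p1; p2; p3] i].
apply/and3P; split.
- apply/injectiveP => i j; rewrite !ffunE.
  case: i => [[|[|[|[|i]]]] hi] //; case: j => [[|[|[|[|j]]]] hj] //= e;
    apply: val_inj => /=; move: e => /(congr1 val) /=; lia.
- apply/forallP => i; apply/forallP => j; apply/forallP => k; rewrite !ffunE.
  case: i => [[|[|[|[|i]]]] hi] //; case: j => [[|[|[|[|j]]]] hj] //;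
  case: k => [[|[|[|[|k]]]] hk] //; apply/eqP; rewrite /cyc /=; lia.
- apply/forallP => e; apply/implyP; rewrite /D2 !inE => /orP [] /eqP ->;
  by rewrite !imsetU !imset_set1 !ffunE !inordK.
Qed.

Lemma copy_of n (H : {set {set 'I_n}}) (p0 p1 p2 p3 : 'I_n) :
  cyc p0 p1 p2 -> cyc p0 p1 p3 -> p2 != p3 ->
  [set p0; p1; p2] \in H -> [set p0; p1; p3] \in H -> contains_copy D2 H.
Proof.
move=> h1 h2 h3 e1 e2.
have [h|h] : cyc p0 p2 p3 \/ cyc p0 p3 p2.
  move: h1 h2 h3; rewrite -val_eqE /cyc /=; lia.
  exact: (copy_of4 h1 h e1 e2).
exact: (copy_of4 h2 h e2 e1).
Qed.

Lemma copy_mono k n (F : {set {set 'I_k}}) (H H' : {set {set 'I_n}}) :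
  H \subset H' -> contains_copy F H -> contains_copy F H'.
Proof.
move=> /subsetP sub /existsP [phi /and3P [i c /forallP e]].
apply/existsP; exists phi; rewrite i c /=; apply/forallP => x.
by apply/implyP => /(implyP (e x)) /sub.
Qed.

Lemma set3P n (t : {set 'I_n}) : #|t| == 3 ->
  exists a b c, [/\ a != b, b != c, c != a & t = [set a; b; c]].
Proof.
move=> /eqP h.
have : 2 < #|t| by rewrite h.
case/card_gt2P => x [y [z [[xt yt zt] [xy yz zx]]]].
exists x, y, z; split => //.
apply/eqP; rewrite eq_sym eqEcard; apply/andP; split.
  by apply/subsetP => u; rewrite !inE => /orP [/orP [] | ] /eqP ->.
by rewrite h setUC cardsU1 cards2 xy !inE negb_or zx (eq_sym z y) yz.
Qed.

Lemma set3C n (a b c : 'I_n) :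
  [set a; b; c] = [set a; c; b] /\ [set a; b; c] = [set b; c; a].
Proof.
split; apply/setP => x; rewrite !inE;
by case: (x == a); case: (x == b); case: (x == c).
Qed.

Definition Cov n (f : {set 'I_n}) : {set {set 'I_n}} :=
  \bigcup_(x0 in f) \bigcup_(x1 in f) \bigcup_(x3 in f)
     [set [set x0; x1; w] | w in [set w : 'I_n | cyc x0 x1 x3 && cyc x0 x1 w]].

Lemma card_bigcup_le (I T : finType) (A : {set I}) (F : I -> {set T}) :
  #|\bigcup_(i in A) F i| <= \sum_(i in A) #|F i|.
Proof.
elim/big_rec2: _ => [|i B s _ IH]; first by rewrite cards0.
by rewrite (leq_trans (leq_card_setU _ _)) // leq_add2l.
Qed.

Lemma sum3 n (a b c : 'I_n) (F : 'I_n -> nat) : a != b -> b != c -> c != a ->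
  \sum_(x in [set a; b; c]) F x = F c + (F a + F b).
Proof.
move=> ab bc ca.
rewrite setUC big_setU1 ?big_setU1 ?big_set1 //.
  by rewrite !inE.
by rewrite !inE negb_or ca eq_sym bc.
Qed.

Lemma count_bound n (a b c w : 'I_n) : a != b -> b != c -> c != a ->
  \sum_(x0 in [set a; b; c]) \sum_(x1 in [set a; b; c]) \sum_(x3 in [set a; b; c])
     (cyc x0 x1 x3 && cyc x0 x1 w) <= 2.
Proof.
move=> ab bc ca; rewrite !sum3 //.
rewrite !cyc_xxy !cyc_xyx !cyc_yxx !andFb ?add0n ?addn0.
have [h|h] := boolP (cyc a b c).
  have h1 := h; rewrite cyc_rot in h1; have h2 := h1; rewrite cyc_rot in h2.
  rewrite ?(cyc_anti h) ?(cyc_anti h1) ?(cyc_anti h2) ?h ?h1 ?h2 ?andFb ?andTb ?addn0 ?add0n.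
  by move: (@cyc_le2 a b c w h); lia.
have [h'|h'] := boolP (cyc a c b).
  have h1 := h'; rewrite cyc_rot in h1; have h2 := h1; rewrite cyc_rot in h2.
  rewrite ?(cyc_anti h') ?(cyc_anti h1) ?(cyc_anti h2) ?h' ?h1 ?h2 ?andFb ?andTb ?addn0 ?add0n.
  by move: (@cyc_le2 a c b w h'); lia.
have e1 : cyc b c a = false by rewrite -cyc_rot (negbTE h).
have e2 : cyc c a b = false by rewrite cyc_rot (negbTE h).
have e3 : cyc c b a = false by rewrite -cyc_rot (negbTE h').
have e4 : cyc b a c = false by rewrite cyc_rot (negbTE h').
by rewrite ?e1 ?e2 ?e3 ?e4.
Qed.

Lemma card_Cov n (f : {set 'I_n}) : #|f| == 3 -> #|Cov f| <= 2 * n.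
Proof.
case/set3P => a [b [c [ab bc ca ->]]].
rewrite /Cov; apply: (leq_trans (card_bigcup_le _ _)).
apply: (@leq_trans (\sum_(x0 in [set a; b; c]) \sum_(x1 in [set a; b; c])
     \sum_(x3 in [set a; b; c]) \sum_(w : 'I_n) (cyc x0 x1 x3 && cyc x0 x1 w))).
  apply: leq_sum => x0 _; apply: (leq_trans (card_bigcup_le _ _)).
  apply: leq_sum => x1 _; apply: (leq_trans (card_bigcup_le _ _)).
  apply: leq_sum => x3 _; apply: (leq_trans (leq_imset_card _ _)).
  rewrite -sum1_card big_mkcond /=; apply: leq_sum => w _.
  by rewrite inE; case: (_ && _).
under eq_bigr => x0 _ do under eq_bigr => x1 _ do rewrite exchange_big.
under eq_bigr => x0 _ do rewrite exchange_big.
rewrite exchange_big.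
apply: (@leq_trans (\sum_(w : 'I_n) 2)).
  by apply: leq_sum => w _; apply: count_bound.
by rewrite sum_nat_const card_ord mulnC.
Qed.

Lemma in_Cov n (f : {set 'I_n}) (x0 x1 x3 w : 'I_n) :
  x0 \in f -> x1 \in f -> x3 \in f -> cyc x0 x1 x3 -> cyc x0 x1 w ->
  [set x0; x1; w] \in Cov f.
Proof.
move=> h0 h1 h3 c1 c2.
apply/bigcupP; exists x0 => //; apply/bigcupP; exists x1 => //.
apply/bigcupP; exists x3 => //; apply/imsetP; exists w => //.
by rewrite inE c1 c2.
Qed.

Lemma cover n (H : {set {set 'I_n}}) (t : {set 'I_n}) :
  saturated D2 H -> #|t| == 3 -> exists2 f, f \in H & t \in Cov f.
Proof.
case/and3P => _ nc /forallP sat ht.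
have [tH|tH] := boolP (t \in H).
  exists t => //.
  case/set3P: ht => a [b [c [ab bc ca ->]]].
  have : cyc a b c || cyc a c b.
    by apply: cyc_or; rewrite -?val_eqE.
  case/orP => h.
    by apply: (@in_Cov _ _ a b c c) => //; rewrite !inE eqxx ?orbT.
  rewrite (proj1 (set3C a b c)).
  by apply: (@in_Cov _ _ a c b b) => //; rewrite !inE eqxx ?orbT.
have := sat t; rewrite ht tH /= => /copy_inv [p0 [p1 [p2 [p3 [c2 c3 d23 e2 e3]]]]].
have nin2 : p3 \notin [set p0; p1; p2].
  move: c2 c3 d23; rewrite !inE -!val_eqE /cyc /=; lia.
have nin3 : p2 \notin [set p0; p1; p3].
  move: c2 c3 d23; rewrite !inE -!val_eqE /cyc /=; lia.
move: e2 e3; rewrite !in_setU1 => /orP [/eqP e2 | e2] /orP [/eqP e3 | e3].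
- by move: nin2; rewrite e2 -e3 !inE eqxx ?orbT.
- exists [set p0; p1; p3] => //; rewrite -e2.
  by apply: (@in_Cov _ _ p0 p1 p3 p2) => //; rewrite !inE eqxx ?orbT.
- exists [set p0; p1; p2] => //; rewrite -e3.
  by apply: (@in_Cov _ _ p0 p1 p2 p3) => //; rewrite !inE eqxx ?orbT.
- by case/negP: nc; apply: copy_of c2 c3 d23 e2 e3.
Qed.

Lemma lower_count n (H : {set {set 'I_n}}) : saturated D2 H -> 'C(n, 3) <= #|H| * (2 * n).
Proof.
move=> sH; have cg : is_cgh3 H by case/and3P: sH.
have -> : 'C(n, 3) = #|[set t : {set 'I_n} | #|t| == 3]| by rewrite card_draws card_ord.
apply: (@leq_trans #|\bigcup_(f in H) Cov f|).
  apply: subset_leq_card; apply/subsetP => t; rewrite inE => ht.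
  by case: (@cover _ H t sH ht) => f fH tf; apply/bigcupP; exists f.
apply: (leq_trans (card_bigcup_le _ _)).
rewrite -sum_nat_const; apply: leq_sum => f fH.
by apply: card_Cov; move/forallP: cg => /(_ f); rewrite fH.
Qed.

Lemma ord_gt0 n (x : 'I_n) : 0 < n.
Proof. exact: leq_ltn_trans (leq0n x) (ltn_ord x). Qed.

Definition shift n (x : 'I_n) (k : nat) : 'I_n :=
  Ordinal (ltn_pmod (x + k) (ord_gt0 x)).

Lemma val_shift n (x : 'I_n) k : val (shift x k) = (x + k) %% n.
Proof. by []. Qed.

Lemma mod2n n m : m < 2 * n -> m %% n = if m < n then m else m - n.
Proof.
move=> h; case: ltnP => h1; first by rewrite modn_small.
by rewrite -{1}(subnK h1) modnDr modn_small //; lia.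
Qed.

Lemma gap_shift n (x : 'I_n) k : k < n -> gap n x (shift x k) = k.
Proof.
move=> hk; have hx := ltn_ord x.
rewrite /gap val_shift mod2n; last by lia.
case: ltnP => h1; case: leqP => h2; lia.
Qed.

Lemma shift_gap n (u v : 'I_n) : shift u (gap n u v) = v.
Proof.
apply: val_inj; rewrite val_shift /gap; have hu := ltn_ord u; have hv := ltn_ord v.
case: leqP => h.
  by rewrite subnKC // modn_small.
have -> : u + (n + v - u) = n + v by lia.
by rewrite modnDl modn_small.
Qed.

Definition LL n := 2 * (n %/ 6).

Lemma LL_facts n : 3 * LL n <= n /\ n < 3 * LL n + 6.
Proof. rewrite /LL; lia. Qed.

Lemma test_odd g n : g %% 2 == 1 -> g <= LL n -> g < LL n.
Proof. rewrite /LL; lia. Qed.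

Definition goodg n (g1 g2 : nat) := [&& g1 %% 2 == 1, g1 < LL n & g2 == g1.+1].

Definition H0 n : {set {set 'I_n}} :=
  [set t : {set 'I_n} | [exists a : 'I_n, exists b : 'I_n, exists c : 'I_n,
     [&& t == [set a; b; c], cyc a b c & goodg n (gap n a b) (gap n b c)]]].

Definition Fnext n g :=
  if (g %% 2 == 1) && (g < LL n) then g.+1
  else if g <= LL n then n.+1 - 2 * g else (n - g - 1) %/ 2.

Lemma in3 n (a b c x : 'I_n) : x \in [set a; b; c] ->
  [|| val x == val a, val x == val b | val x == val c].
Proof. by rewrite !inE -!val_eqE /= orbA. Qed.

Lemma keyK n (p0 p1 p2 : 'I_n) : cyc p0 p1 p2 -> [set p0; p1; p2] \in H0 n ->
  gap n p1 p2 = Fnext n (gap n p0 p1).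
Proof.
move=> hp; rewrite inE => /existsP [a /existsP [b /existsP [c /and3P [/eqP e hc hg]]]].
have m0 : p0 \in [set a; b; c] by rewrite -e !inE eqxx.
have m1 : p1 \in [set a; b; c] by rewrite -e !inE eqxx ?orbT.
have m2 : p2 \in [set a; b; c] by rewrite -e !inE eqxx ?orbT.
have s := @cyc_gap_sum n a b c (ltn_ord a) (ltn_ord b) (ltn_ord c) hc.
have [L1 L2] := LL_facts n.
move: hg; rewrite /goodg /Fnext => hg.
case: (@rot3_nat _ _ _ _ _ _ (in3 m0) (in3 m1) (in3 m2) hp hc) =>
  [[/val_inj -> [/val_inj -> /val_inj ->]] | [[/val_inj -> [/val_inj -> /val_inj ->]] |
   [/val_inj -> [/val_inj -> /val_inj ->]]]];
  case: ifP => h1; try case: ifP => h2; lia.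
Qed.

Lemma H0_free n : ~~ contains_copy D2 (H0 n).
Proof.
apply/negP => /copy_inv [p0 [p1 [p2 [p3 [c2 c3 d e2 e3]]]]].
have g2 := keyK c2 e2; have g3 := keyK c3 e3.
by move: d; rewrite -(shift_gap p1 p2) -(shift_gap p1 p3) g2 g3 eqxx.
Qed.

Lemma card3 n (a b c : 'I_n) : a != b -> b != c -> c != a -> #|[set a; b; c]| = 3.
Proof.
move=> xy yz zx.
by rewrite setUC cardsU1 cards2 xy !inE negb_or (eq_sym c b) yz zx.
Qed.

Lemma cyc_neq {n} {a b c : 'I_n} : cyc a b c -> [/\ a != b, b != c & c != a].
Proof. rewrite /cyc => h; rewrite -!val_eqE /=; split; lia. Qed.

Lemma H0_cgh3 n : is_cgh3 (H0 n).
Proof.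
apply/forallP => t; apply/implyP.
rewrite inE => /existsP [a /existsP [b /existsP [c /and3P [/eqP -> hc _]]]].
by case: (cyc_neq hc) => h1 h2 h3; rewrite card3.
Qed.

Lemma gap_xx n (x : nat) : gap n x x = 0.
Proof. by rewrite /gap leqnn subnn. Qed.

Lemma finish n (a b c w : 'I_n) : cyc a b c -> cyc a b w -> [set a; b; w] \in H0 n ->
  [set a; b; c] \notin H0 n -> contains_copy D2 ([set a; b; c] |: H0 n).
Proof.
move=> h1 h2 hw hc.
have cw : c != w by apply: contraNneq hc => ->.
apply: (@copy_of _ _ a b c w h1 h2 cw); first exact: setU11.
by rewrite in_setU1 hw orbT.
Qed.

Lemma covered n (a b c : 'I_n) : 12 <= n -> cyc a b c -> gap n a b <= LL n ->
  [set a; b; c] \notin H0 n -> contains_copy D2 ([set a; b; c] |: H0 n).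
Proof.
move=> hn h hg hnot.
have [L1 L2] := LL_facts n.
have [ab bc ca] := cyc_neq h.
have hab : (a : nat) != b by [].
have gb := @gap_bnd n a b (ltn_ord a) (ltn_ord b) hab.
have ha := ltn_ord a; have hb := ltn_ord b.
have [hodd|heven] := boolP (gap n a b %% 2 == 1).
- set w := shift b (gap n a b).+1.
  have hw := ltn_ord w.
  have gw : gap n b w = (gap n a b).+1 by rewrite gap_shift //; lia.
  have bw : (b : nat) != w.
    by apply/eqP => e; move: gw; rewrite -e gap_xx.
  have wa : (w : nat) != a.
    apply/eqP => e; move: gw; rewrite e => gw.
    have := @gap_sym n a b ha hb hab; lia.
  have cw : cyc a b w.
    rewrite (@cyc_gapP n) // hab bw wa gw /=; lia.
  apply: (@finish n a b c w h cw) => //.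
  rewrite inE; apply/existsP; exists a; apply/existsP; exists b; apply/existsP; exists w.
  rewrite eqxx cw gw /goodg hodd eqxx /= andbT /LL; move: hg; rewrite /LL; lia.
- set w := shift a (n - (gap n a b).-1).
  have hw := ltn_ord w.
  have gaw : gap n a w = n - (gap n a b).-1 by rewrite gap_shift //; lia.
  have aw : (a : nat) != w.
    by apply/eqP => e; move: gaw; rewrite -e gap_xx; lia.
  have gwa : gap n w a = (gap n a b).-1.
    have := @gap_sym n a w ha hw aw; lia.
  have bw : (b : nat) != w.
    by apply/eqP => e; move: gaw; rewrite -e; lia.
  have cw' : cyc w a b.
    rewrite (@cyc_gapP n) // eq_sym aw hab bw gwa /=; lia.
  have cw : cyc a b w by move: cw'; rewrite cyc_rot.
  apply: (@finish n a b c w h cw) => //.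
  rewrite -(proj2 (set3C w a b)).
  rewrite inE; apply/existsP; exists w; apply/existsP; exists a; apply/existsP; exists b.
  rewrite eqxx cw' gwa /goodg /=; move: hg heven; rewrite /LL; lia.
Qed.

Definition f9 n (p : 'I_n * 'I_3 * 'I_3) : {set 'I_n} :=
  let a := p.1.1 in let b := shift a (LL n + 1 + p.1.2) in
  [set a; b; shift b (LL n + 1 + p.2)].

Definition Img9 n := @f9 n @: [set: 'I_n * 'I_3 * 'I_3].

Lemma card_Img9 n : #|Img9 n| <= n * 3 * 3.
Proof.
apply: (leq_trans (leq_imset_card _ _)).
by rewrite cardsT !card_prod !card_ord.
Qed.

Lemma orient n (t : {set 'I_n}) : #|t| == 3 ->
  exists a b c : 'I_n, cyc a b c /\ t = [set a; b; c].
Proof.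
case/set3P => a [b [c [ab bc ca ->]]].
have : cyc a b c || cyc a c b by apply: cyc_or; rewrite -?val_eqE.
case/orP => h; first by exists a, b, c.
by exists a, c, b; rewrite (proj1 (set3C a b c)).
Qed.

Lemma uncov n (t : {set 'I_n}) : 12 <= n -> #|t| == 3 -> t \notin H0 n ->
  ~~ contains_copy D2 (t |: H0 n) -> t \in Img9 n.
Proof.
move=> hn /orient [a [b [c [h ->]]]] hnot nc.
have [L1 L2] := LL_facts n.
have s := @cyc_gap_sum n a b c (ltn_ord a) (ltn_ord b) (ltn_ord c) h.
case: (leqP (gap n a b) (LL n)) => h1.
  by case/negP: nc; apply: covered.
have hb : cyc b c a by rewrite -cyc_rot.
have hc : cyc c a b by rewrite -cyc_rot.
have e1 := proj2 (set3C a b c).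
have e2 := proj2 (set3C c a b).
case: (leqP (gap n b c) (LL n)) => h2.
  by case/negP: nc; rewrite e1; apply: covered => //; rewrite -e1.
case: (leqP (gap n c a) (LL n)) => h3.
  by case/negP: nc; rewrite -e2; apply: covered => //; rewrite e2.
have i1 : gap n a b - LL n - 1 < 3 by lia.
have i2 : gap n b c - LL n - 1 < 3 by lia.
apply/imsetP; exists (a, Ordinal i1, Ordinal i2); first by rewrite inE.
rewrite /f9 /=.
have -> : LL n + 1 + (gap n a b - LL n - 1) = gap n a b by lia.
have -> : LL n + 1 + (gap n b c - LL n - 1) = gap n b c by lia.
by rewrite !shift_gap.
Qed.

Definition f6 n (p : 'I_n * 'I_(n %/ 6)) : {set 'I_n} :=
  let a := p.1 in let b := shift a (2 * p.2 + 1) in [set a; b; shift b (2 * p.2 + 2)].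

Lemma card_H0 n : #|H0 n| <= n * (n %/ 6).
Proof.
apply: (@leq_trans #|@f6 n @: [set: 'I_n * 'I_(n %/ 6)]|); last first.
  apply: (leq_trans (leq_imset_card _ _)).
  by rewrite cardsT !card_prod !card_ord.
apply: subset_leq_card; apply/subsetP => t.
rewrite inE => /existsP [a /existsP [b /existsP [c /and3P [/eqP -> hc hg]]]].
move: hg; rewrite /goodg /LL => /and3P [/eqP g1 g2 /eqP g3].
have k : gap n a b %/ 2 < n %/ 6 by lia.
apply/imsetP; exists (a, Ordinal k); first by rewrite inE.
rewrite /f6 /=.
have -> : 2 * (gap n a b %/ 2) + 1 = gap n a b by lia.
have -> : 2 * (gap n a b %/ 2) + 2 = gap n b c by lia.
by rewrite !shift_gap.
Qed.

Lemma upper_exists n : 12 <= n ->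
  exists H : {set {set 'I_n}}, saturated D2 H /\ #|H| <= n * (n %/ 6) + n * 3 * 3.
Proof.
move=> hn.
pose P := fun H : {set {set 'I_n}} =>
  [&& is_cgh3 H, ~~ contains_copy D2 H & H0 n \subset H].
have P0 : P (H0 n) by rewrite /P H0_cgh3 H0_free subxx.
case: (@arg_maxnP _ (H0 n) P (fun H => #|H|) P0) => H PH maxH.
case/and3P: PH => cg nc sub.
exists H; split.
- rewrite /saturated cg nc /=; apply/forallP => e; apply/implyP => /andP [e3 eH].
  have [//|ncopy] := boolP (contains_copy D2 (e |: H)); exfalso.
  have : P (e |: H).
    rewrite /P ncopy /=; apply/andP; split.
      apply/forallP => x; apply/implyP; rewrite in_setU1 => /orP [/eqP -> //|xH].
      by move/forallP: cg => /(_ x); rewrite xH.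
    by apply: (subset_trans sub); apply: subsetUr.
  by move/maxH; rewrite cardsU1 eH /=; lia.
- apply: (@leq_trans #|H0 n :|: Img9 n|).
    apply: subset_leq_card; apply/subsetP => t tH; rewrite in_setU.
    have [//|tn] := boolP (t \in H0 n); rewrite /=.
    apply: uncov => //.
      by move/forallP: cg => /(_ t); rewrite tH.
    apply: contra nc; apply: copy_mono.
    by rewrite subUset sub1set tH sub.
  apply: (leq_trans (leq_card_setU _ _)); apply: leq_add.
    exact: card_H0.
  exact: card_Img9.
Qed.

Lemma bigmin_le (I : eqType) (r : seq I) (P : pred I) (F : I -> nat) x0 i :
  i \in r -> P i -> \big[minn/x0]_(j <- r | P j) F j <= F i.
Proof.
elim: r => // j r IH; rewrite inE big_cons => /orP [/eqP <- -> | ir Pi].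
  exact: geq_minl.
case: ifP => _; last exact: IH.
by rewrite geq_min IH ?orbT.
Qed.

Lemma binom3 n : 'C(n, 3) * 6 = n * (n - 1) * (n - 2).
Proof.
have := bin_ffact n 3; rewrite !ffactnS ffactn0 /= => ->.
by rewrite -!subn1 -subnDA /= muln1 mulnA.
Qed.

Theorem propositionA7 :
  exists (C N : nat), forall n : nat, (N <= n)%N ->
    (n ^ 2 <= 12 * sat_cyc n D2 + C * n)%N /\
    (24 * sat_cyc n D2 <= 5 * n ^ 2 + C * n)%N.
Proof.
exists 216, 12 => n hn; split.
- rewrite /sat_cyc.
  apply: (big_ind (fun x => n ^ 2 <= 12 * x + 216 * n)).
  + have := binom3 n; nia.
  + by move=> x y hx hy; rewrite /minn; case: ifP.
  + move=> H sH; have h := @lower_count _ H sH.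
    have h6 := binom3 n.
    have h2 : (n - 1) * (n - 2) <= 12 * #|H|.
      have : n * ((n - 1) * (n - 2)) <= n * (12 * #|H|) by nia.
      by rewrite leq_pmul2l //; lia.
    nia.
- case: (@upper_exists n hn) => H [sH cH].
  have : sat_cyc n D2 <= #|H|.
    by apply: bigmin_le => //; rewrite mem_index_enum.
  move: cH; have := leq_trunc_div n 6; nia.
Qed.
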